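(* Let $n\ge2$ and $P_{II*}=\{\downarrow\{\xi\}:\ \xi\in P_I,\ |\xi|=n-1\}$. For partitions $\xi,\upsilon\in P_I$ with $|\xi|=|\upsilon|=n-1$, one has $\mathcal C_{\{\downarrow\{\xi\}\}\text{-unc}}=\mathcal C_{\{\downarrow\{\upsilon\}\}\text{-unc}}$ (the classes labelled by the filters $\uparrow\{\downarrow\{\xi\}\}\cap P_{II*}=\{\downarrow\{\xi\}\}$ and $\{\downarrow\{\upsilon\}\}$) if and only if $\xi=\upsilon$.
   Context: Let $L=\{1,\dots,n\}$, and for $i\in L$ let $\mathcal H_i$ be a Hilbert space with $1<\dim\mathcal H_i<\infty$; $\mathcal H_X=\bigotimes_{i\in X}\mathcal H_i$ and $\mathcal D_X$ is the set of density operators on $\mathcal H_X$. $P_I$ is the set of partitions of $L$ ordered by refinement; $|\xi|$ is the number of parts of $\xi$, and $\downarrow\{\xi\}=\{\upsilon\in P_I:\upsilon\preceq\xi\}$. For $\xi\in P_I$, $\mathcal D_{\xi\text{-unc}}=\{\varrho\in\mathcal D_L:\varrho=\bigotimes_{X\in\xi}\varrho_X,\ \varrho_X\in\mathcal D_X\}$, and for $S\subseteq P_I$, $\mathcal D_{S\text{-unc}}=\bigcup_{\xi\in S}\mathcal D_{\xi\text{-unc}}$. $P_{II}$ is the set of nonempty down-sets of $P_I$, ordered by inclusion; $P_{III*}$ is the set of nonempty up-sets of $P_{II*}$. For $\Xi\in P_{III*}$: $\overline\Xi=P_{II*}\setminus\Xi$ and $\mathcal C_{\Xi\text{-unc}}=\bigcap_{\boldsymbol\xi'\in\overline\Xi}(\mathcal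 D_L\setminus\mathcal D_{\boldsymbol\xi'\text{-unc}})\cap\bigcap_{\boldsymbol\xi\in\Xi}\mathcal D_{\boldsymbol\xi\text{-unc}}$. *)

(* Defs.v *)
From HB Require Import structures.
From mathcomp Require Import all_boot all_order all_algebra.
Set Implicit Arguments. Unset Strict Implicit. Unset Printing Implicit Defensive.
Import Order.TTheory GRing.Theory Num.Theory.
Local Open Scope ring_scope.

(* Parties: L = 'I_n (i.e. {0,...,n-1}, a relabelling of {1,...,n}).
   H_i has dimension d i; its standard basis is 'I_(d i).
   H_X = (x)_{i in X} H_i has basis idx d X = dependent functions
   assigning to each i in X a basis index of H_i. *)
Section Defs.
Variables (C : numClosedFieldType) (n : nat) (d : 'I_n -> nat).

Definition idx (X : {set 'I_n}) :=
  {dffun forall i : {i : 'I_n | i \in X}, 'I_(d (val i))}.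

(* operators on H_X, as matrices in the product basis *)
Definition op (X : {set 'I_n}) := idx X -> idx X -> C.

Definition density (X : {set 'I_n}) (rho : op X) : Prop :=
  [/\ (forall a b, rho b a = (rho a b)^*),
      (forall v : idx X -> C,
          0 <= \sum_(a : idx X) \sum_(b : idx X) (v a)^* * rho a b * v b)
    & \sum_(a : idx X) rho a a = 1].

Definition res (X : {set 'I_n}) (a : idx [set: 'I_n]) : idx X :=
  [ffun i : {i : 'I_n | i \in X} => a (exist _ (val i) (in_setT (val i)))].

Definition PI : {set {set {set 'I_n}}} :=
  [set x : {set {set 'I_n}} | partition x [set: 'I_n]].

Definition refines (u x : {set {set 'I_n}}) : bool :=
  [forall Y in u, [exists X in x, Y \subset X]].

Definition down (x : {set {set 'I_n}}) : {set {set {set 'I_n}}} :=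
  [set u in PI | refines u x].

Definition PIIstar : {set {set {set {set 'I_n}}}} :=
  [set down x | x in [set y in PI | #|y| == n.-1]].

Definition Dunc (x : {set {set 'I_n}}) (rho : op [set: 'I_n]) : Prop :=
  density rho /\
  exists fam : forall X : {set 'I_n}, op X,
    (forall X, X \in x -> density (fam X)) /\
    (forall a b, rho a b = \prod_(X in x) fam X (res X a) (res X b)).

Definition DSunc (S : {set {set {set 'I_n}}}) (rho : op [set: 'I_n]) : Prop :=
  exists2 x, x \in S & Dunc x rho.

Definition Cunc (Xi : {set {set {set {set 'I_n}}}}) (rho : op [set: 'I_n]) : Prop :=
  [/\ density rho,
      (forall S, S \in PIIstar -> S \notin Xi -> ~ DSunc S rho)
    & (forall S, S \in Xi -> DSunc S rho)].

End Defs.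

(* Main.v *)
Require Import Defs.
From HB Require Import structures.
From mathcomp Require Import all_boot all_order all_algebra.
From mathcomp Require Import zify.
Import Order.TTheory GRing.Theory Num.Theory.
Local Open Scope ring_scope.
Set Implicit Arguments. Unset Strict Implicit. Unset Printing Implicit Defensive.

Section Comb.
Variable n : nat.
Implicit Types x y v : {set {set 'I_n}}.

Lemma refinesP (u x : {set {set 'I_n}}) : reflect (forall Y, Y \in u -> exists2 X, X \in x & Y \subset X) (refines u x).
Proof.
apply: (iffP forall_inP) => H Y /H.
- by case/exists_inP=> X; exists X.
- by case=> X XP YX; apply/exists_inP; exists X.
Qed.

Lemma refines_card_eq x y : partition x [set: 'I_n] -> partition y [set: 'I_n] ->
  refines x y -> #|x| = #|y| -> x = y.
Proof.
move=> px py /refinesP ref cxy.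
have /and3P[covx tx nx0] := px.
have /and3P[covy ty ny0] := py.
pose g := fun X : {set 'I_n} => \bigcup_(k in X) pblock y k.
have gX : forall X, X \in x -> [/\ g X \in y, X \subset g X & forall k, k \in X -> pblock y k = g X].
  move=> X Xx; have [Y Yy XY] := ref X Xx.
  have pk : forall k, k \in X -> pblock y k = Y.
    by move=> k kX; apply: def_pblock => //; apply: (subsetP XY).
  have XN : X != set0 by apply: contraNneq nx0 => <-.
  have [k kX] := set0Pn _ XN.
  have -> : g X = Y.
    apply/eqP; rewrite eqEsubset; apply/andP; split.
      by apply/bigcupsP => m mX; rewrite pk.
    by rewrite -(pk k kX); apply: (bigcup_sup k).
  by split.
have sub : y \subset g @: x.
  apply/subsetP => Y Yy.
  have YN : Y != set0 by apply: contraNneq ny0 => <-.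
  have [k kY] := set0Pn _ YN.
  have kc : k \in cover x by rewrite (eqP covx) inE.
  have Xx := pblock_mem kc.
  have [_ _ pk] := gX _ Xx.
  apply/imsetP; exists (pblock x k) => //.
  by rewrite -(pk k); [rewrite (def_pblock ty Yy kY) | rewrite mem_pblock].
have inj : {in x &, injective g}.
  apply/imset_injP; rewrite eqn_leq leq_imset_card /= cxy.
  exact: subset_leq_card.
have xy : x \subset y.
  apply/subsetP => X Xx; have [gy sX pk] := gX X Xx.
  suff e : X = g X by rewrite e.
  apply/eqP; rewrite eqEsubset sX /=; apply/subsetP => k kg.
  have kc : k \in cover x by rewrite (eqP covx) inE.
  have Xk := pblock_mem kc.
  have [_ _ pk'] := gX _ Xk.
  have e : g (pblock x k) = g X.
    rewrite -(pk' k); last by rewrite mem_pblock.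
    exact: def_pblock ty gy kg.
  by rewrite -(inj _ _ Xk Xx e) mem_pblock.
by apply/eqP; rewrite eqEcard xy cxy leqnn.
Qed.

Lemma struct x : partition x [set: 'I_n] -> (2 <= n)%N -> #|x| = n.-1 ->
  exists2 P, P \in x & forall X, X \in x -> X != P -> exists k, X = [set k].
Proof.
move=> px n2 cx; have /and3P[covx tx nx0] := px.
have sz : forall X, X \in x -> (0 < #|X|)%N.
  by move=> X Xx; rewrite card_gt0; apply: contraNneq nx0 => <-.
have hs : (\sum_(X in x) (#|X| - 1) = 1)%N.
  have := card_partition px; rewrite cardsT card_ord.
  have -> : (\sum_(X in x) #|X| = \sum_(X in x) (#|X| - 1) + #|x|)%N.
    rewrite -sum1_card -big_split /=; apply: eq_bigr => X Xx; rewrite subnK //; exact: sz.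
  rewrite cx -subn1; move: (\sum_(X in x) (#|X| - 1))%N => s.
  clear -n2; lia.
have : ~~ [forall X in x, #|X| - 1 == 0]%N.
  apply/negP => /forall_inP H; move: hs; rewrite big1 //; by move=> X /H /eqP.
case/forall_inPn => P Px /= PP.
exists P => // X Xx XP.
move: hs; rewrite (bigD1 P) //= (bigD1 X) /=; last by rewrite Xx.
move=> hs; have h1' : #|X| == 1%N.
  have := sz X Xx; move: PP hs.
  move: (\sum_(i | _) _)%N (#|P|) (#|X|) => a b c; lia.
by case/cards1P: h1' => k ->; exists k.
Qed.

Lemma xy_eq (x y v : {set {set 'I_n}}) P i :
  partition x [set: 'I_n] -> partition y [set: 'I_n] -> partition v [set: 'I_n] ->
  #|x| = #|y| -> P \in x -> (forall X, X \in x -> X != P -> exists k, X = [set k]) ->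
  refines v y -> (forall k, k \in P -> k \in pblock v i) -> x = y.
Proof.
move=> px py pv cxy Px Ps /refinesP rv Pv.
apply: refines_card_eq => //; apply/refinesP => X Xx.
have /and3P[covv _ _] := pv.
have /and3P[covy _ _] := py.
case: (eqVneq X P) => [->|XP].
  have ic : i \in cover v by rewrite (eqP covv) inE.
  have [Y Yy VY] := rv _ (pblock_mem ic).
  by exists Y => //; apply: subset_trans VY; apply/subsetP.
have [k ->] := Ps X Xx XP.
have kc : k \in cover y by rewrite (eqP covy) inE.
by exists (pblock y k); [apply: pblock_mem | rewrite sub1set mem_pblock].
Qed.
End Comb.

Section Main.
Variables (C : numClosedFieldType) (n : nat) (d : 'I_n -> nat).
Hypothesis hd : forall i, (1 < d i)%N.

Definition zr (i : 'I_n) : 'I_(d i) := Ordinal (ltnW (hd i)).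
Definition on1 (i : 'I_n) : 'I_(d i) := Ordinal (hd i).

Definition cfg (S : {set 'I_n}) : idx d [set: 'I_n] :=
  finfun (fun k : {i : 'I_n | i \in [set: 'I_n]} =>
    if val k \in S then on1 (val k) else zr (val k)).

Lemma res_cfg W S S' : S :&: W = S' :&: W -> res W (cfg S) = res W (cfg S').
Proof.
move=> e; apply/ffunP => -[k kW]; rewrite !ffunE /=.
have -> : (k \in S) = (k \in S') by move/setP: e => /(_ k); rewrite !inE kW !andbT.
by [].
Qed.

Lemma cfg_neq (S S' : {set 'I_n}) (i : 'I_n) : i \in S -> i \notin S' -> cfg S != cfg S'.
Proof.
move=> iS iS'; apply/eqP => e.
have := congr1 (fun f : idx d [set: 'I_n] => val (f (exist _ i (in_setT i)))) e.
by rewrite /= !ffunE /= iS (negbTE iS').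
Qed.

Lemma res_ext (x : {set {set 'I_n}}) (px : partition x [set: 'I_n]) (a b : idx d [set: 'I_n]) :
  (forall X, X \in x -> res X a = res X b) -> a = b.
Proof.
move=> H; apply/ffunP => -[k kT].
have /and3P[covx _ _] := px.
have kc : k \in cover x by rewrite (eqP covx) inE.
have /ffunP := H _ (pblock_mem kc).
have kP : k \in pblock x k by rewrite mem_pblock.
move=> /(_ (exist _ k kP)); rewrite !ffunE /=.
by have -> : kT = in_setT k by apply: bool_irrelevance.
Qed.

Lemma diag_density X (w : idx d X -> C) : (forall a, 0 <= w a) -> \sum_a w a = 1 ->
  density (fun a b : idx d X => (a == b)%:R * w a).
Proof.
move=> w0 w1; split.
- move=> a b; case: (eqVneq a b) => [->|ab]; first by rewrite !mul1r geC0_conj.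
  by rewrite !mul0r conjC0.
- move=> v; apply: sumr_ge0 => a _.
  rewrite (bigD1 a) //= big1 ?addr0; last first.
    by move=> b /negbTE ba; rewrite eq_sym ba mul0r mulr0 mul0r.
  rewrite eqxx mul1r -mulrA mulrCA; apply: mulr_ge0 => //.
  by have := mul_conjC_ge0 (v a); rewrite mulrC.
- by rewrite -[RHS]w1; apply: eq_bigr => a _; rewrite eqxx mul1r.
Qed.

Lemma sum_ind X (c : idx d X) : \sum_(a : idx d X) (a == c)%:R = 1 :> C.
Proof. by rewrite (bigD1 c) //= eqxx big1 ?addr0 // => a /negbTE ->. Qed.

Lemma half_half : (1 / 2 + 1 / 2 : C) = 1.
Proof. by rewrite -mulrDl -mulr2n divff // pnatr_eq0. Qed.

Definition w2 X (c0 c1 a : idx d X) : C := (a == c0)%:R / 2 + (a == c1)%:R / 2.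

Lemma w2_ge0 X (c0 c1 a : idx d X) : 0 <= w2 c0 c1 a.
Proof. by rewrite /w2 addr_ge0 // divr_ge0 // ler0n. Qed.

Lemma w2_sum X (c0 c1 : idx d X) : \sum_a w2 c0 c1 a = 1.
Proof. by rewrite /w2 big_split /= -!mulr_suml !sum_ind half_half. Qed.


Definition A0 := cfg set0.
Definition rhoP (P : {set 'I_n}) : op C d [set: 'I_n] :=
  fun a b => (a == b)%:R * w2 A0 (cfg P) a.
Definition gP (P X : {set 'I_n}) (c : idx d X) : C :=
  if X == P then w2 (res X A0) (res X (cfg P)) c else (c == res X A0)%:R.
Definition famP (P X : {set 'I_n}) : op C d X :=
  fun c c' => (c == c')%:R * gP P c.
Arguments famP : clear implicits.

Lemma res_out (x : {set {set 'I_n}}) P X : partition x [set: 'I_n] -> P \in x -> X \in x ->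
  X != P -> res X (cfg P) = res X A0.
Proof.
move=> /and3P[_ tx _] Px Xx XP; apply: res_cfg.
have := disjoint_setI0 ((trivIsetP tx) _ _ Xx Px XP).
move=> /setP e; apply/setP => z; have := e z; rewrite !inE.
by case: (z \in X); case: (z \in P).
Qed.

Lemma prod_formula (x : {set {set 'I_n}}) P : partition x [set: 'I_n] -> P \in x ->
  forall a b, rhoP P a b = \prod_(X in x) famP P X (res X a) (res X b).
Proof.
move=> px Px a b; rewrite /rhoP /famP big_split /=.
have -> : \prod_(X in x) ((res X a == res X b)%:R : C) = (a == b)%:R.
  case: (eqVneq a b) => [->|ab]; first by rewrite big1 // => X _; rewrite eqxx.
  case: (boolP [forall X in x, res X a == res X b]) => [/forall_inP H|/forall_inPn [X Xx nX]].
    by case/eqP: ab; apply: (res_ext px) => X /H /eqP.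
  by rewrite (bigD1 X) //= (negbTE nX) mul0r.
case: (eqVneq a b) => [_|]; last by rewrite !mul0r.
rewrite !mul1r (bigD1 P) //=.
rewrite (eq_bigr (fun X => (res X a == res X A0)%:R)); last first.
  by move=> X /andP[_ XP]; rewrite /gP (negbTE XP).
rewrite /gP eqxx.
case: (boolP [forall X in [pred X | (X \in x) && (X != P)], res X a == res X A0]).
  move=> /forall_inP H; rewrite big1 ?mulr1; last by move=> X /H ->.
  rewrite /w2; congr (_ / 2 + _ / 2); congr (nat_of_bool _)%:R; apply/eqP/eqP.
  - by move=> ->.
  - move=> e; apply: (res_ext px) => X Xx; case: (eqVneq X P) => [->//|XP].
    by apply/eqP; apply: H; rewrite inE Xx XP.
  - by move=> ->.
  - move=> e; apply: (res_ext px) => X Xx; case: (eqVneq X P) => [->//|XP].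
    rewrite (res_out px Px Xx XP); apply/eqP; apply: H; by rewrite inE Xx XP.
move=> /forall_inPn [X]; rewrite inE => /andP[Xx XP] nX.
rewrite (bigD1 X) /=; last by rewrite Xx XP.
rewrite (negbTE nX) mul0r mulr0 /w2.
have -> : (a == A0) = false by apply/negbTE; apply: contraNneq nX => ->.
have -> : (a == cfg P) = false.
  by apply/negbTE; apply: contraNneq nX => ->; rewrite (res_out px Px Xx XP).
by rewrite mul0r addr0.
Qed.


Lemma rhoP_diag P a : rhoP P a a = w2 A0 (cfg P) a.
Proof. by rewrite /rhoP eqxx mul1r. Qed.

Lemma key (v : {set {set 'I_n}}) P (fam : forall X : {set 'I_n}, op C d X) i k :
  partition v [set: 'I_n] ->
  (forall a b, rhoP P a b = \prod_(W in v) fam W (res W a) (res W b)) ->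
  i \in P -> k \in P -> k \in pblock v i.
Proof.
move=> pv H iP kP; case: (boolP (k \in pblock v i)) => // kV.
have /and3P[covv tv _] := pv.
set V := pblock v i.
have ic : i \in cover v by rewrite (eqP covv) inE.
have Vv : V \in v by apply: pblock_mem.
have iV : i \in V by rewrite mem_pblock.
pose B := cfg (P :&: V); pose B' := cfg (P :\: V).
have E : rhoP P A0 A0 * rhoP P (cfg P) (cfg P) = rhoP P B B * rhoP P B' B'.
  rewrite !H -!big_split /=; apply: eq_bigr => W Wv.
  case: (eqVneq W V) => [->|WV].
    rewrite (@res_cfg V (P :&: V) P); last first.
      by apply/setP => z; rewrite !inE; case: (z \in P); case: (z \in V).
    rewrite (@res_cfg V (P :\: V) set0); last first.
      by apply/setP => z; rewrite !inE; case: (z \in P); case: (z \in V).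
    by rewrite mulrC.
  have /setP e := disjoint_setI0 ((trivIsetP tv) _ _ Wv Vv WV).
  rewrite (@res_cfg W (P :&: V) set0); last first.
    by apply/setP => z; have := e z; rewrite !inE; case: (z \in P); case: (z \in V); case: (z \in W).
  rewrite (@res_cfg W (P :\: V) P) //.
  by apply/setP => z; have := e z; rewrite !inE; case: (z \in P); case: (z \in V); case: (z \in W).
move: E; rewrite !rhoP_diag /w2 eqxx.
have -> : (A0 == cfg P) = false.
  by apply/negbTE; rewrite eq_sym; apply: (cfg_neq (i := i)); rewrite ?inE.
have -> : (cfg P == A0) = false.
  by apply/negbTE; apply: (cfg_neq (i := i)); rewrite ?inE.
have -> : (B == A0) = false.
  by apply/negbTE; apply: (cfg_neq (i := i)); rewrite ?inE ?iP.
have -> : (B == cfg P) = false.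
  by apply/negbTE; rewrite eq_sym; apply: (cfg_neq (i := k)); rewrite ?inE ?kP // (negbTE kV).
rewrite !mul0r !addr0 add0r mul0r => /eqP.
by rewrite eqxx mul1r mulf_eq0 orbb invr_eq0 pnatr_eq0.
Qed.

End Main.

Theorem proposition8 (C : numClosedFieldType) (n : nat) (d : 'I_n -> nat)
    (hd : forall i, (1 < d i)%N) (hn : (2 <= n)%N)
    (x u : {set {set 'I_n}})
    (hx : x \in PI n) (hu : u \in PI n)
    (hxn : #|x| = n.-1) (hun : #|u| = n.-1) :
  (forall rho : op C d [set: 'I_n],
      @Cunc C n d [set down x] rho <-> @Cunc C n d [set down u] rho)
  <-> x = u.
Proof.
split; last by move=> ->.
move=> Hall.
have px : partition x [set: 'I_n] by move: hx; rewrite inE.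
have [P Px Psing] := struct px hn hxn.
have /and3P[_ _ nx0] := px.
have : P != set0 by apply: contraNneq nx0 => <-.
case/set0Pn => i iP.
pose rho := rhoP C hd P.
have drho : density rho by apply: diag_density; [exact: w2_ge0 | exact: w2_sum].
have toEq : forall y, y \in PI n -> #|y| = n.-1 -> forall v, v \in down y -> Dunc v rho -> x = y.
  move=> y hy hyn v; rewrite inE => /andP[hv rv] [_ [fam [_ Hf]]].
  have py : partition y [set: 'I_n] by move: hy; rewrite inE.
  have pv : partition v [set: 'I_n] by move: hv; rewrite inE.
  apply: (xy_eq px py pv _ Px Psing rv); first by rewrite hxn hyn.
  by move=> k kP; apply: (key pv Hf iP kP).
have Cx : Cunc [set down x] rho.
  split => //.
  - move=> S /imsetP [y]; rewrite inE => /andP[hy /eqP hyn] -> Sn [v vy Dv].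
    have exy := toEq y hy hyn v vy Dv.
    by move: Sn; rewrite exy inE eqxx.
  - move=> S; rewrite inE => /eqP ->; exists x.
      by rewrite inE hx /=; apply/refinesP => X Xx; exists X.
    split => //; exists (fun X => @famP C n d hd P X); split.
      move=> X Xx; apply: diag_density.
        by move=> c; rewrite /gP; case: (X == P); rewrite ?w2_ge0 ?ler0n.
      by rewrite /gP; case: (X == P); rewrite ?w2_sum ?sum_ind.
    exact: prod_formula.
have [_ _ H3] := (Hall rho).1 Cx.
have [v vu Dv] := H3 (down u) (set11 _).
exact: toEq u hu hun v vu Dv.
Qed.
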